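(* Let $a=(a_1,\dots,a_d)\in\mathcal{UN}_d$ and let $A_a$ be a real symmetric matrix associated to $a$. Then for each $j=1,\dots,d$, all $j\times j$ principal minors of $A_a$ are equal.
   Context: A polynomial in $\mathbb{R}[z]$ is hyperbolic if all its roots are real. A sequence $a\in\mathbb{R}^d$ is a Nuij sequence if for every hyperbolic $p\in\mathbb{R}[z]$ of degree $d$, $p_a(z,s):=p(z)+\sum_{k=1}^d a_k s^k p^{(k)}(z)$ is hyperbolic for all $s\in\mathbb{R}$. A Nuij sequence $a$ admits a universal determinantal representation if there exists a real symmetric $d\times d$ matrix $A_a$ such that for every monic hyperbolic polynomial $p(z)=(z+\lambda_1)\cdots(z+\lambda_d)$ of degree $d$ one has $p_a(z,s)=\det(zI+D+sA_a)$, where $D$ is the diagonal matrix with diagonal entries $\lambda_1,\dots,\lambda_d$ in an arbitrary order; such $A_a$ is called a matrix associated to $a$. $\mathcal{UN}_d$ is the set of Nuij sequences in $\mathbb{R}^d$ admitting a universal determinantal representation. A $j\times j$ principal minor of a $d\times d$ matrix is the determinant of the submatrix obtained by deleting the same set of $d-j$ row and column indices. *)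

(* Defs.v *)
From HB Require Import structures.
From mathcomp Require Import all_boot all_order all_algebra.
From mathcomp Require Import reals.
From mathcomp.real_closed Require Import complex.
Set Implicit Arguments. Unset Strict Implicit. Unset Printing Implicit Defensive.
Import Order.TTheory GRing.Theory Num.Theory.
Local Open Scope ring_scope.
Local Open Scope complex_scope.

Definition hyperbolic (R : realType) (p : {poly R}) : Prop :=
  forall z : R[i], root (map_poly (fun x : R => x%:C) p) z -> Im z = 0.

(* p_a(z,s) = p(z) + sum_{k=1}^d a_k s^k p^(k)(z), as a polynomial in z for fixed s.
   The sequence a = (a_1,...,a_d) is stored as a row vector with a_k = a 0 (k-1). *)
Definition nuij_poly (R : realType) (d : nat) (a : 'rV[R]_d) (p : {poly R}) (s : R)
  : {poly R} :=
  p + \sum_(k < d) (a 0 k * s ^+ k.+1) *: p^`(k.+1).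

Definition nuij_seq (R : realType) (d : nat) (a : 'rV[R]_d) : Prop :=
  forall p : {poly R}, size p = d.+1 -> hyperbolic p ->
  forall s : R, hyperbolic (nuij_poly a p s).

(* A is a (real symmetric) matrix associated to a: for every monic hyperbolic
   p(z) = prod_i (z + lambda_i) (lambda_i listed in an arbitrary order),
   p_a(z,s) = det(zI + D + sA), D = diag(lambda). *)
Definition associated_matrix (R : realType) (d : nat) (a : 'rV[R]_d) (A : 'M[R]_d)
  : Prop :=
  A^T = A /\
  forall lam : 'rV[R]_d, forall z s : R,
    (nuij_poly a (\prod_(i < d) ('X + (lam 0 i)%:P)) s).[z]
    = \det (z%:M + diag_mx lam + s *: A).

Definition UN (R : realType) (d : nat) (a : 'rV[R]_d) : Prop :=
  nuij_seq a /\ exists A : 'M[R]_d, associated_matrix a A.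

Definition principal_minor (R : realType) (d : nat) (A : 'M[R]_d) (S : {set 'I_d}) : R :=
  \det (\matrix_(i < #|S|, k < #|S|) A (enum_val i) (enum_val k)).

(* Main.v *)
Require Import Defs.
From mathcomp Require Import all_boot all_order all_algebra.
From mathcomp Require Import zify ring.
From mathcomp Require Import reals.
Set Implicit Arguments. Unset Strict Implicit. Unset Printing Implicit Defensive.
Import Order.TTheory GRing.Theory Num.Theory.
Local Open Scope ring_scope.

Section L.
Variable R : comNzRingType.

Definition Mat n (F : nat -> nat -> R) : 'M[R]_n := \matrix_(i < n, k < n) F i k.

Lemma bump_lt h i k : (i < k)%N -> (bump h i < bump h k)%N.
Proof. rewrite /bump; case: (leqP h i); case: (leqP h k) => /=; lia. Qed.

Lemma unbump_lt h i k : i != h -> k != h -> (i < k)%N -> (unbump h i < unbump h k)%N.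
Proof. rewrite /unbump => /eqP ? /eqP ?; case: (ltnP h i); case: (ltnP h k) => /=; lia. Qed.

Lemma signr_dbl (i : nat) : (-1) ^+ (i + i) = 1 :> R.
Proof. by rewrite -signr_odd addnn odd_double. Qed.

Lemma keyL n : forall (F : nat -> nat -> R) (P : nat -> bool) m (g : nat -> nat),
  (forall i, (i < m)%N -> (g i < n)%N) ->
  (forall i k, (i < k)%N -> (k < m)%N -> (g i < g k)%N) ->
  (forall x, (x < n)%N -> P x -> exists2 i, (i < m)%N & g i = x) ->
  (forall i, (i < m)%N -> P (g i)) ->
  \det (Mat n (fun i k => if P i then F i k else (i == k)%:R)) =
  \det (Mat m (fun i k => F (g i) (g k))).
Proof.
elim: n => [|n IH] F P m g gn gmono gsurj gP.
  have -> : m = 0%N by case: m gn gmono gsurj gP => // m /(_ 0%N erefl).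
  by rewrite !det_mx00.
case: (boolP [exists i : 'I_n.+1, ~~ P i]) => [/existsP [i0 nP]|/existsPn allP].
  rewrite (expand_det_row _ i0) (bigD1 i0) //= big1 => [|k /negPf kn]; last first.
    rewrite mxE (negbTE nP) [_ == _](_ : _ = false) ?mul0r //; rewrite eq_sym; exact: kn.
  rewrite mxE (negbTE nP) eqxx mul1r addr0 /cofactor signr_dbl mul1r.
  set F' := fun i k => F (bump i0 i) (bump i0 k).
  set P' := fun i => P (bump i0 i).
  set g' := fun i => unbump i0 (g i).
  have gne : forall i, (i < m)%N -> g i != i0.
    by move=> i /gP Pi; apply/eqP => e; move: nP; rewrite -e Pi.
  have -> : row' i0 (col' i0 (Mat n.+1 (fun i k => if P i then F i k else (i == k)%:R)))
     = Mat n (fun i k => if P' i then F' i k else (i == k)%:R).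
    apply/matrixP => i k; rewrite !mxE /= /P' /F'.
    by case: (P _) => //; rewrite (inj_eq (can_inj (bumpK i0))).
  rewrite (IH F' P' m g').
  - congr (\det _); apply/matrixP => i k; rewrite !mxE /F' /g' !unbumpKcond.
    by rewrite (negbTE (gne _ (ltn_ord i))) (negbTE (gne _ (ltn_ord k))).
  - move=> i im; rewrite /g'; have := gn i im; have := gne i im.
    rewrite /unbump => /eqP; case: (ltnP i0 (g i)) => /=; have := ltn_ord i0; lia.
  - by move=> i k ik km; apply: unbump_lt; [apply: gne; lia|apply: gne|apply: gmono].
  - move=> x xn Px; have [|i im gi] := gsurj (bump i0 x) _ Px.
      rewrite /bump; have := ltn_ord i0; case: (leqP i0 x) => /=; lia.
    by exists i => //; rewrite /g' gi bumpK.
  - move=> i im; rewrite /P' /g' unbumpKcond (negbTE (gne _ im)); exact: gP.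
have Pall : forall x, (x < n.+1)%N -> P x.
  by move=> x xn; have := allP (Ordinal xn); rewrite negbK.
have gge : forall i, (i < m)%N -> (i <= g i)%N.
  elim=> // i IHi im; have := gmono i i.+1 (ltnSn i) im; have := IHi (ltnW im); lia.
have gid : forall i, (i < m)%N -> g i = i.
  elim/ltn_ind=> i IHi im.
  have [i' i'm gi'] := gsurj i (leq_ltn_trans (gge i im) (gn i im)) (Pall _ (leq_ltn_trans (gge i im) (gn i im))).
  case: (ltngtP i' i) => [lt|gt|e]; last by move: gi'; rewrite e.
    by move: (IHi i' lt (ltn_trans lt im)); rewrite gi' => e; move: lt; rewrite e ltnn.
  by have := gmono _ _ gt i'm; have := gge i im; rewrite gi'; lia.
have em : m = n.+1.
  apply/eqP; rewrite eqn_leq; apply/andP; split.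
    case: (leqP m n.+1) => // lt; have := gn n.+1 lt; rewrite gid //; lia.
  have [i' i'm gi'] := gsurj n (ltnSn n) (Pall _ (ltnSn n)).
  by move: gi'; rewrite gid // => <-.
subst m; congr (\det _); apply/matrixP => i k; rewrite !mxE !gid // Pall //.
Qed.
End L.
Lemma sorted_enum_set n (S : {set 'I_n}) : sorted ltn (map val (enum S)).
Proof.
rewrite sorted_map /enum_mem; apply: sorted_filter; first by move=> x y z /=; apply: ltn_trans.
by have := iota_ltn_sorted 0 n; rewrite -val_enum_ord sorted_map enumT.
Qed.

Lemma pm_E (R : realType) d (A : 'M[R]_d.+1) (S : {set 'I_d.+1}) :
  principal_minor A S = \det (\matrix_(i, k) if i \in S then A i k else (i == k)%:R).
Proof.
pose FA := fun i k : nat => A (inord i) (inord k).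
pose g := fun i => nth 0%N (map val (enum S)) i.
have gE : forall i : 'I_#|S|, g i = val (enum_val i).
  by move=> i; rewrite /g (nth_map ord0) -?cardE // (enum_val_nth ord0).
rewrite /principal_minor.
transitivity (\det (Mat #|S| (fun i k => FA (g i) (g k)))).
  congr (\det _); apply/matrixP => i k; rewrite !mxE.
  have -> : i = Ordinal (ltn_ord i) by apply: val_inj.
  have -> : k = Ordinal (ltn_ord k) by apply: val_inj.
  by rewrite !gE /FA !inord_val.
transitivity (\det (Mat d.+1 (fun i k => if inord i \in S then FA i k else (i == k)%:R))); last first.
  by congr (\det _); apply/matrixP => i k; rewrite !mxE /FA !inord_val.
symmetry; apply: keyL.
- by move=> i im; rewrite (gE (Ordinal im)) ltn_ord.
- move=> i k ik km; rewrite /g; apply: (sorted_ltn_nth ltn_trans) => //;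
    [exact: sorted_enum_set | rewrite inE size_map -cardE; exact: ltn_trans ik km | by rewrite inE size_map -cardE].
- move=> x xn Px; exists (index (inord x : 'I_d.+1) (enum S)).
    by rewrite cardE index_mem mem_enum.
  have xin : (inord x : 'I_d.+1) \in enum S by rewrite mem_enum.
  by rewrite /g (nth_map ord0) ?index_mem // nth_index //; apply: inordK.
- by move=> i im; rewrite (gE (Ordinal im)) inord_val enum_valP.
Qed.

Lemma poly_zero (R : realType) (q : {poly R}) : (forall s, s != 0 -> q.[s] = 0) -> q = 0.
Proof.
move=> H; apply/eqP; apply/negPn/negP => nz.
suff : (size [seq (i.+1)%:R : R | i <- iota 0 (size q)] < size q)%N.
  by rewrite size_map size_iota ltnn.
apply: max_poly_roots nz _ _.
  apply/allP => x /mapP [i _ ->]; rewrite /root; apply/eqP; apply: H.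
  by rewrite pnatr_eq0.
rewrite map_inj_uniq ?iota_uniq // => x y /eqP; rewrite eqr_nat eqSS => /eqP.
by [].
Qed.

Theorem lemma3p3 (R : realType) (d : nat) (a : 'rV[R]_d) (A : 'M[R]_d) :
  UN a -> associated_matrix a A ->
  forall j : nat, (1 <= j <= d)%N ->
  forall S T : {set 'I_d}, #|S| = j -> #|T| = j ->
  principal_minor A S = principal_minor A T.
Proof.
move=> _ [Asym Hass] j /andP[j1 jd] S T hS hT.
case: d a A Asym Hass S T hS hT jd => [|d] a A Asym Hass S T hS hT jd; first lia.
pose lam (U : {set 'I_d.+1}) : 'rV[R]_d.+1 := \row_i (if i \in U then 0 else 1).
pose Ns (U : {set 'I_d.+1}) (s : R) : 'M[R]_d.+1 :=
  \matrix_(i, k) (if i \in U then A i k else (i == k)%:R + s * A i k).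
pose NP (U : {set 'I_d.+1}) : 'M[{poly R}]_d.+1 :=
  \matrix_(i, k) (if i \in U then (A i k)%:P else ((i == k)%:R)%:P + 'X * (A i k)%:P).
have prodE : forall U : {set 'I_d.+1}, \prod_i ('X + ((lam U) 0 i)%:P)
    = 'X ^+ #|U| * ('X + 1) ^+ (d.+1 - #|U|).
  move=> U; rewrite (bigID (fun i => i \in U)) /=.
  rewrite (eq_bigr (fun _ => 'X)) => [|i iU]; last by rewrite mxE iU addr0.
  rewrite [X in _ * X](eq_bigr (fun _ => 'X + 1)) => [|i iU]; last by rewrite mxE (negbTE iU) polyC1.
  rewrite prodr_const; congr (_ * _).
  rewrite (_ : \prod_(i | i \notin U) ('X + 1) = \prod_(i in ~: U) ('X + 1)).
    by rewrite prodr_const cardsCs setCK card_ord.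
  by apply: eq_bigl => i; rewrite inE.
have factE : forall (U : {set 'I_d.+1}) (s : R), 0%:M + diag_mx (lam U) + s *: A
    = diag_mx (\row_i (if i \in U then s else 1)) *m Ns U s.
  move=> U s; apply/matrixP => i k; rewrite mul_diag_mx !mxE.
  by case: (i \in U); case: (i == k); rewrite ?mulr1n ?mulr0n /=; ring.
have detD : forall (U : {set 'I_d.+1}) (s : R),
    \det (diag_mx (\row_i (if i \in U then s else 1))) = s ^+ #|U|.
  move=> U s; rewrite det_diag (eq_bigr (fun i => if i \in U then s else 1)) => [|i _];
    last by rewrite mxE.
  by rewrite -big_mkcond prodr_const.
have evalE : forall (U : {set 'I_d.+1}) (s : R), (\det (NP U)).[s] = \det (Ns U s).
  move=> U s; rewrite -horner_evalE -det_map_mx; congr (\det _).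
  apply/matrixP => i k; rewrite !mxE /= horner_evalE.
  by case: (i \in U); rewrite ?hornerE.
have eqs : forall s, s != 0 -> \det (Ns S s) = \det (Ns T s).
  move=> s s0.
  have := Hass (lam S) 0 s; have := Hass (lam T) 0 s.
  rewrite !prodE hS hT => -> e.
  move: e; rewrite !factE !det_mulmx !detD hS hT.
  by move/(mulfI (expf_neq0 j s0)) => ->.
have q0 : \det (NP S) - \det (NP T) = 0.
  by apply: poly_zero => s s0; rewrite hornerD hornerN !evalE eqs // subrr.
have : (\det (NP S) - \det (NP T)).[0] = 0 by rewrite q0 horner0.
rewrite hornerD hornerN !evalE => /eqP; rewrite subr_eq0 => /eqP e0.
rewrite !pm_E.
have NE : forall U : {set 'I_d.+1}, Ns U 0 = \matrix_(i, k) if i \in U then A i k else (i == k)%:R.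
  by move=> U; apply/matrixP => i k; rewrite !mxE mul0r addr0.
by rewrite -!NE.
Qed.
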